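(* Let $q\neq-1$ be real and $n\ge0$. Then $$U_{2n+1}(x,s,q)=\sum_{k=0}^{n}\begin{bmatrix} 2n+2\\ 2k\end{bmatrix}\frac{1}{[2k+1]}(-q;q)_{2n-2k+1}(-1)^{n-k}G_{2n-2k+2}(q)\,x^{2n+1-2k}\,U_{2k}(x,s,q).$$
   Context: $U_{-1}=0$, $U_0=1$, $U_n(x,s,q)=(1+q^{n})x\,U_{n-1}(x,s,q)+q^{n-1}s\,U_{n-2}(x,s,q)$ for $n\ge1$. Notation: $[m]=1+q+\cdots+q^{m-1}$, $[m]!=[1]\cdots[m]$, $\begin{bmatrix} m\\ j\end{bmatrix}=\frac{[m]!}{[j]![m-j]!}$; $(a;q)_m=(1-a)(1-aq)\cdots(1-aq^{m-1})$, so $(-q;q)_m=(1+q)\cdots(1+q^m)$. With $e(z)=\sum_{m\ge0}z^m/[m]!$, the $q$-Genocchi numbers $G_{2m}(q)$, $m\ge1$, are defined by the formal power series identity $z\frac{e(z)-e(-z)}{e(z)+e(-z)}=\sum_{m\ge1}\frac{(-1)^{m-1}G_{2m}(q)(-q;q)_{2m-1}}{[2m]!}z^{2m}$. *)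

(* Defs.v *)
From mathcomp Require Import all_boot all_order all_algebra.
Set Implicit Arguments. Unset Strict Implicit. Unset Printing Implicit Defensive.
Import Order.TTheory GRing.Theory Num.Theory.
Local Open Scope ring_scope.

Section Defs.
Variable R : realFieldType.

Definition qint (q : R) (m : nat) : R := \sum_(i < m) q ^+ i.
Definition qfact (q : R) (m : nat) : R := \prod_(i < m) qint q i.+1.
Definition qbinom (q : R) (m j : nat) : R :=
  qfact q m / (qfact q j * qfact q (m - j)).
Definition qpoch (a q : R) (m : nat) : R := \prod_(i < m) (1 - a * q ^+ i).

(* U_{n-1}, U_n as a pair; U_{-1} = 0, U_0 = 1,
   U_n = (1+q^n) x U_{n-1} + q^(n-1) s U_{n-2}. *)
Fixpoint Upair (x s q : R) (n : nat) : R * R :=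
  match n with
  | 0 => (0, 1)
  | n'.+1 => let (a, b) := Upair x s q n' in
             (b, (1 + q ^+ n'.+1) * x * b + q ^+ n' * s * a)
  end.
Definition U (x s q : R) (n : nat) : R := (Upair x s q n).2.

(* Formal power series as coefficient sequences nat -> R. *)
Definition fps_add (a b : nat -> R) : nat -> R := fun n => a n + b n.
Definition fps_sub (a b : nat -> R) : nat -> R := fun n => a n - b n.
Definition fps_mul (a b : nat -> R) : nat -> R :=
  fun n => \sum_(i < n.+1) a i * b (n - i)%N.
Definition fps_mulz (a : nat -> R) : nat -> R :=
  fun n => if n is n'.+1 then a n' else 0.

(* e(z) = sum z^m/[m]! and e(-z) *)
Definition qexp (q : R) : nat -> R := fun m => (qfact q m)^-1.
Definition qexpN (q : R) : nat -> R := fun m => (-1) ^+ m * (qfact q m)^-1.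

Definition genocchi_series (q : R) (G : nat -> R) : nat -> R :=
  fun N => if odd N || (N == 0)%N then 0 else
    (-1) ^+ (N./2).-1 * G N * qpoch (- q) q N.-1 / qfact q N.

(* G is the q-Genocchi sequence: the identity
   z (e(z)-e(-z))/(e(z)+e(-z)) = genocchi_series, written after clearing
   the (invertible, constant term 2) denominator e(z)+e(-z). *)
Definition is_qGenocchi (q : R) (G : nat -> R) : Prop :=
  forall N, fps_mul (fps_add (qexp q) (qexpN q)) (genocchi_series q G) N
            = fps_mulz (fps_sub (qexp q) (qexpN q)) N.

End Defs.

(* Main.v *)
Require Import Defs.
From mathcomp Require Import all_boot all_order all_algebra.
From mathcomp Require Import ring lra zify.
Import Order.TTheory GRing.Theory Num.Theory.
Local Open Scope ring_scope.
Set Implicit Arguments. Unset Strict Implicit.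

Section FPS.
Variable R : realFieldType.
Implicit Types a b c : nat -> R.

Definition tp (N : nat) a : {poly R} := \poly_(k < N.+1) a k.

Lemma fpsP a b N i : (i <= N)%N -> (tp N a * tp N b)`_i = fps_mul a b i.
Proof.
move=> hi; rewrite coefM /fps_mul; apply: eq_bigr => j _.
rewrite /tp !coef_poly.
have hj : (j < N.+1)%N by have := ltn_ord j; lia.
have hj' : (i - j < N.+1)%N by lia.
by rewrite hj hj'.
Qed.

Lemma fps_mul_ext a a' b b' N :
  (forall i, (i <= N)%N -> a i = a' i) -> (forall i, (i <= N)%N -> b i = b' i) ->
  fps_mul a b N = fps_mul a' b' N.
Proof.
move=> ha hb; apply: eq_bigr => i _.
have hi := ltn_ord i.
by rewrite ha ?hb //; lia.
Qed.

Lemma fps_mulA a b c N :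
  fps_mul (fps_mul a b) c N = fps_mul a (fps_mul b c) N.
Proof.
have -> : fps_mul (fps_mul a b) c N = ((tp N a * tp N b) * tp N c)`_N.
  rewrite coefM; apply: eq_bigr => j _.
  have hj := ltn_ord j.
  rewrite fpsP; last by lia.
  by rewrite /tp coef_poly ifT //; lia.
have -> : fps_mul a (fps_mul b c) N = (tp N a * (tp N b * tp N c))`_N.
  rewrite coefM; apply: eq_bigr => j _.
  have hj := ltn_ord j.
  rewrite fpsP; last by lia.
  by rewrite /tp coef_poly ifT //; lia.
by rewrite mulrA.
Qed.

Lemma fps_mulC a b N : fps_mul a b N = fps_mul b a N.
Proof. by rewrite -(@fpsP a b N N (leqnn N)) -(@fpsP b a N N (leqnn N)) mulrC. Qed.

Lemma fps_mulz_mul a b N : fps_mul (fps_mulz a) b N = fps_mulz (fps_mul a b) N.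
Proof.
case: N => [|N]; first by rewrite /fps_mul big_ord_recl big_ord0 /= mul0r addr0.
rewrite /fps_mul big_ord_recl /= mul0r add0r; apply: eq_bigr => i _.
by rewrite /bump /= add1n subSS.
Qed.

Lemma fps_mul_mulz a b N : fps_mul a (fps_mulz b) N = fps_mulz (fps_mul a b) N.
Proof.
rewrite fps_mulC fps_mulz_mul.
by case: N => [|N] //=; rewrite fps_mulC.
Qed.

Lemma fps_cancel a b c : a 0%N != 0 ->
  (forall N, fps_mul a b N = fps_mul a c N) -> forall N, b N = c N.
Proof.
move=> ha0 h N; elim: N {-2}N (leqnn N) => [|M IH] N hN.
  have := h 0%N; rewrite /fps_mul !big_ord_recl !big_ord0 !addr0 /=.
  have -> : N = 0%N by lia.
  by move/(mulfI ha0).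
have := h N; rewrite /fps_mul !big_ord_recl /= !subn0.
have -> : \sum_(i < N) a (bump 0 i) * b (N - bump 0 i)%N
        = \sum_(i < N) a (bump 0 i) * c (N - bump 0 i)%N.
  apply: eq_bigr => i _; rewrite IH //.
  have := ltn_ord i; rewrite /bump /=; lia.
by move/addIr/(mulfI ha0).
Qed.

End FPS.

Section QBasic.
Variable R : realFieldType.
Variable q : R.

Lemma qint0 : qint q 0 = 0. Proof. by rewrite /qint big_ord0. Qed.
Lemma qintS k : qint q k.+1 = qint q k + q ^+ k.
Proof. by rewrite /qint big_ord_recr. Qed.
Lemma qint1 : qint q 1 = 1. Proof. by rewrite qintS qint0 add0r expr0. Qed.
Lemma qintD m n : qint q (m + n) = qint q m + q ^+ m * qint q n.
Proof.
elim: n => [|n IH]; first by rewrite addn0 qint0 mulr0 addr0.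
by rewrite addnS !qintS IH exprD; ring.
Qed.
Lemma qint_geo k : q ^+ k = 1 - (1 - q) * qint q k.
Proof.
elim: k => [|k IH]; first by rewrite qint0 expr0; ring.
by rewrite qintS exprS IH; ring.
Qed.

Lemma qint_neq0 k : q != -1 -> qint q k.+1 != 0.
Proof.
move=> hq; apply/negP => /eqP h0.
have hx : q ^+ k.+1 = 1 by rewrite qint_geo h0 mulr0 subr0.
have hn : `|q| ^+ k.+1 = 1 by rewrite -normrX hx normr1.
have /eqP : `|q| == 1 by rewrite -(pexpr_eq1 (n:=k.+1)) // hn.
have [q0|q0] := lerP 0 q.
  rewrite ger0_norm // => q1.
  move: h0; rewrite /qint q1.
  under eq_bigr do rewrite expr1n.
  rewrite sumr_const card_ord => /eqP; by rewrite pnatr_eq0.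
rewrite ltr0_norm // => q1.
by move: hq; rewrite -q1 opprK eqxx.
Qed.

Lemma qfact0 : qfact q 0 = 1. Proof. by rewrite /qfact big_ord0. Qed.
Lemma qfactS k : qfact q k.+1 = qfact q k * qint q k.+1.
Proof. by rewrite /qfact big_ord_recr. Qed.
Lemma qfact_neq0 k : q != -1 -> qfact q k != 0.
Proof.
move=> hq; elim: k => [|k IH]; first by rewrite qfact0 oner_eq0.
by rewrite qfactS mulf_neq0 // qint_neq0.
Qed.

End QBasic.

Ltac fld := field; repeat (apply/andP; split); try done.

Section Explicit.
Variable R : realFieldType.
Variables q x s : R.
Hypothesis hq : q != -1.

Definition gam (M i : nat) : R :=
  if (i <= M)%N then qfact q M / (qfact q i * qfact q (M - i)) * q ^+ 'C(i, 2) else 0.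

Lemma binC2 a : 'C(a.+2, 2) = ('C(a, 2) + a + a.+1)%N.
Proof. rewrite binS binS !bin1; lia. Qed.

Let qn k := qint_neq0 k hq.
Let fn k := qfact_neq0 k hq.

Lemma qintSl k : qint q k.+1 = 1 + q * qint q k.
Proof.
by have := qintD q 1 k; rewrite add1n qint1 expr1.
Qed.

Lemma gamE k n : gam (k + n) k = qfact q (k + n) / (qfact q k * qfact q n) * q ^+ 'C(k, 2).
Proof. by rewrite /gam leq_addr addKn. Qed.

Lemma gam_big M i : (M < i)%N -> gam M i = 0.
Proof. by move=> h; rewrite /gam leqNgt h. Qed.

Lemma binC1 a : 'C(a.+1, 2) = ('C(a, 2) + a)%N.
Proof. by rewrite binS bin1. Qed.

Lemma core_id a c :
  qint q (a + c).+3 * qint q (a + c).+4 * (q * q ^+ a) =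
  (1 + q * (q * (q * (q ^+ a * q ^+ c)))) * qint q (a + c).+3 * qint q a.+2
  + qint q c.+1 * qint q c.+2 * (q * (q * (q * (q ^+ a * q ^+ a))))
  - qint q a.+1 * qint q a.+2.
Proof.
rewrite !qintS qintD !exprS exprD (qint_geo q a) (qint_geo q c).
ring.
Qed.

Lemma gam_id_gen a c :
  gam (a + c).+4 a.+2 = (1 + q ^+ (a + c).+3) * gam (a + c).+3 a.+1
               + q ^+ a.+2 * gam (a + c).+2 a.+2 - q ^+ a * gam (a + c).+2 a.
Proof.
have e1 : gam (a + c).+4 a.+2 = qfact q (a + c).+4 / (qfact q a.+2 * qfact q c.+2) * q ^+ 'C(a.+2, 2).
  by rewrite (_ : (a + c).+4 = (a.+2 + c.+2)%N) ?gamE //; lia.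
have e2 : gam (a + c).+3 a.+1 = qfact q (a + c).+3 / (qfact q a.+1 * qfact q c.+2) * q ^+ 'C(a.+1, 2).
  by rewrite (_ : (a + c).+3 = (a.+1 + c.+2)%N) ?gamE //; lia.
have e3 : gam (a + c).+2 a.+2 = qfact q (a + c).+2 / (qfact q a.+2 * qfact q c) * q ^+ 'C(a.+2, 2).
  by rewrite (_ : (a + c).+2 = (a.+2 + c)%N) ?gamE //; lia.
have e4 : gam (a + c).+2 a = qfact q (a + c).+2 / (qfact q a * qfact q c.+2) * q ^+ 'C(a, 2).
  by rewrite (_ : (a + c).+2 = (a + c.+2)%N) ?gamE //; lia.
rewrite e1 e2 e3 e4 binC2 binC1 !exprD.
rewrite !qfactS.
have h1 := qn a. have h2 := qn a.+1. have h3 := qn c. have h4 := qn c.+1.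
have h5 := qn (a + c).+2. have h6 := qn (a + c).+3.
have h7 := fn a. have h8 := fn c. have h9 := fn (a + c).
have h10 := qn (a + c). have h11 := qn (a + c).+1.
rewrite !exprS exprD.
clear e1 e2 e3 e4.
move: h1 h2 h3 h4 h5 h6 h7 h8 h9 h10 h11.
set F := qfact q (a + c). set B1 := qint q (a + c).+1. set B2 := qint q (a + c).+2.
set B3 := qint q (a + c).+3. set B4 := qint q (a + c).+4.
set fa := qfact q a. set fc := qfact q c. set A1 := qint q a.+1. set A2 := qint q a.+2.
set C1 := qint q c.+1. set C2 := qint q c.+2. set Q0 := q ^+ 'C(a, 2). set y := q ^+ a. set z := q ^+ c.
move=> h1 h2 h3 h4 h5 h6 h7 h8 h9 h10 h11. clear qn fn.
have hcore := core_id a c. rewrite -/B3 -/B4 -/A1 -/A2 -/C1 -/C2 -/y -/z in hcore.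
clearbody F B1 B2 B3 B4 fa fc A1 A2 C1 C2 Q0 y z.
pose K := F * B1 * B2 * Q0 * y / (fa * fc * A1 * A2 * C1 * C2).
have -> : F * B1 * B2 * B3 * B4 / (fa * A1 * A2 * (fc * C1 * C2)) * (Q0 * y * (q * y))
   = K * (B3 * B4 * (q * y)).
  by rewrite /K; fld.
have -> : (1 + q * (q * (q * (y * z)))) * (F * B1 * B2 * B3 / (fa * A1 * (fc * C1 * C2)) * (Q0 * y))
   = K * ((1 + q * (q * (q * (y * z)))) * B3 * A2) by rewrite /K; fld.
have -> : q * (q * y) * (F * B1 * B2 / (fa * A1 * A2 * fc) * (Q0 * y * (q * y)))
   = K * (C1 * C2 * (q * (q * (q * (y * y))))) by rewrite /K; fld.
have -> : y * (F * B1 * B2 / (fa * (fc * C1 * C2)) * Q0) = K * (A1 * A2) by rewrite /K; fld.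
rewrite -!mulrDr -mulrBr; congr (K * _).
exact: hcore.
Qed.


Lemma gam_id M i : (i <= M.+2)%N ->
  gam M.+2 i = (if i is i'.+1 then (1 + q ^+ M.+1) * gam M.+1 i' else 0)
               + q ^+ i * gam M i
               - (if i is i'.+2 then q ^+ i' * gam M i' else 0).
Proof.
case: i => [|[|a]] hi.
- rewrite /gam !subn0 /= !expr0 !mulr1 qfact0 !mul1r subr0 add0r.
  by rewrite !divff ?fn.
- rewrite /gam /= (_ : 'C(1,2) = 0%N) // (_ : 'C(0,2) = 0%N) // !expr0 !mulr1 subr0 subn0 qfact0 mul1r.
  rewrite (_ : qfact q 1 = 1); last by rewrite qfactS qfact0 qint1 mul1r.
  rewrite !mul1r subn1 /=.
  case: M hi => [|M] _ /=.
    rewrite mulr0 addr0 !qfactS qfact0 qint1 !mul1r qintS qint1 expr1.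
    have := qn 1%N; rewrite qintS qint1 expr1 => h.
    by fld.
  rewrite subSS subn0 expr1 !qfactS (qintSl M.+2) (exprS q M.+1).
  have hB : qint q M.+2 = qint q M.+1 + q ^+ M.+1 by rewrite qintS.
  have h1 := qn M. have h2 := qn M.+1. have h3 := fn M.
  move: h1 h2 h3 hB; set A := qint q M.+1; set B := qint q M.+2; set F := qfact q M; set y := q ^+ M.+1.
  move=> h1 h2 h3 hB; clearbody A B F y; clear qn fn.
  rewrite hB in h2 *.
  by fld.
- have [b eb] : exists b, M = (a + b)%N by exists (M - a)%N; lia.
  subst M.
  clear hi; case: b => [|[|c]].
  + rewrite addn0 (@gam_big a a.+2) ?mulr0 ?addr0; last by lia.
    rewrite /gam !leqnn !subnn !qfact0 !mulr1 binC2 binC1 !exprS !exprD.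
    rewrite !divff ?fn // !mul1r.
    by rewrite exprS; ring.
  + rewrite addn1 (@gam_big a.+1 a.+2) ?mulr0 ?addr0; last by lia.
    have qf1 : qfact q 1 = 1 by rewrite qfactS qfact0 qint1 mul1r.
    have rat k : qfact q k.+1 / (qfact q k * qfact q 1) = qint q k.+1.
      by rewrite qf1 mulr1 qfactS mulrAC divff ?fn // mul1r.
    have e1 : gam a.+3 a.+2 = qint q a.+3 * q ^+ 'C(a.+2,2).
      by rewrite -rat (_ : a.+3 = (a.+2 + 1)%N) ?gamE //; lia.
    have e2 : gam a.+2 a.+1 = qint q a.+2 * q ^+ 'C(a.+1,2).
      by rewrite -rat (_ : a.+2 = (a.+1 + 1)%N) ?gamE //; lia.
    have e3 : gam a.+1 a = qint q a.+1 * q ^+ 'C(a,2).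
      by rewrite -rat (_ : a.+1 = (a + 1)%N) ?gamE //; lia.
    rewrite e1 e2 e3 binC2 binC1 !exprD !qintS !exprS (qint_geo q a).
    by ring.
  + rewrite (_ : (a + c.+2)%N = (a + c).+2); last by lia.
    exact: gam_id_gen.
Qed.

Definition pi k := \prod_(l < k) (x ^+ 2 + q ^+ (2 * l).+1 * s).
Definition rho j := if odd j then pi j./2 else 0.
Definition S M := \sum_(i < M.+1) gam M i * x ^+ i * rho (M - i).

Lemma rho_rec j : rho j.+2 = (x ^+ 2 + q ^+ j * s) * rho j.
Proof.
rewrite /rho /= negbK.
case: (boolP (odd j)) => hj; last by rewrite mulr0.
rewrite /pi big_ord_recr /= mulrC.
have h := odd_double_half j; rewrite hj -mul2n /= in h.
by rewrite (_ : (2 * j./2).+1 = j) //; lia.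
Qed.

Lemma rho0 : rho 0 = 0. Proof. by []. Qed.

Lemma S_rec M : S M.+2 = (1 + q ^+ M.+1) * x * S M.+1 + q ^+ M * s * S M.
Proof.
rewrite /S.
rewrite (eq_bigr (fun i : 'I_M.+3 =>
   (if nat_of_ord i is i'.+1 then (1 + q ^+ M.+1) * gam M.+1 i' else 0) * x ^+ i * rho (M.+2 - i)
   + q ^+ i * gam M i * x ^+ i * rho (M.+2 - i)
   - (if nat_of_ord i is i'.+2 then q ^+ i' * gam M i' else 0) * x ^+ i * rho (M.+2 - i))); last first.
  move=> i _; rewrite gam_id; last by rewrite -ltnS ltn_ord.
  by rewrite -mulrDl -mulrBl -mulrDl -mulrBl.
rewrite sumrB big_split /=.
have -> : \sum_(i < M.+3) (if nat_of_ord i is i'.+1 then (1 + q ^+ M.+1) * gam M.+1 i' else 0)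
            * x ^+ i * rho (M.+2 - i)
        = (1 + q ^+ M.+1) * x * \sum_(i < M.+2) gam M.+1 i * x ^+ i * rho (M.+1 - i).
  rewrite big_ord_recl /= !mul0r add0r mulr_sumr; apply: eq_bigr => i _.
  rewrite /bump /= ?add0n ?add1n subSS !exprS; ring.
have -> : \sum_(i < M.+3) q ^+ i * gam M i * x ^+ i * rho (M.+2 - i)
        = \sum_(i < M.+1) q ^+ i * gam M i * x ^+ i * rho (M - i).+2.
  rewrite big_ord_recr big_ord_recr /= !gam_big // !mulr0 !mul0r !addr0.
  apply: eq_bigr => i _; have := ltn_ord i => hi.
  by rewrite (_ : (M.+2 - i)%N = (M - i).+2) //; lia.
have -> : \sum_(i < M.+3) (if nat_of_ord i is i'.+2 then q ^+ i' * gam M i' else 0)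
            * x ^+ i * rho (M.+2 - i)
        = \sum_(i < M.+1) q ^+ i * gam M i * x ^+ i.+2 * rho (M - i).
  rewrite big_ord_recl big_ord_recl /= !mul0r !add0r; apply: eq_bigr => i _.
  by rewrite /bump /= ?add0n ?add1n !subSS.
rewrite -addrA -sumrB; congr (_ + _).
rewrite mulr_sumr; apply: eq_bigr => i _; have := ltn_ord i => hi.
rewrite rho_rec.
rewrite (_ : q ^+ M = q ^+ i * q ^+ (M - i)); last by rewrite -exprD; congr (_ ^+ _); lia.
rewrite !exprS; ring.
Qed.

Lemma S0 : S 0 = 0.
Proof. by rewrite /S big_ord_recl big_ord0 /= rho0 mulr0 addr0. Qed.

Lemma gam_0 M : gam M 0 = 1.
Proof. by rewrite /gam /= subn0 qfact0 mul1r divff ?fn // expr0 mulr1. Qed.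

Lemma S1 : S 1 = 1.
Proof.
rewrite /S big_ord_recr big_ord_recl big_ord0 /= subnn rho0 mulr0 addr0 gam_0.
by rewrite subn0 addr0 expr0 !mul1r /rho /pi /= big_ord0.
Qed.

Lemma Upair_S m : Upair x s q m = (S m, S m.+1).
Proof.
elim: m => [|m IH]; first by rewrite /= S0 S1.
by rewrite /= IH S_rec; congr (_, _); ring.
Qed.

Lemma U_S m : U x s q m = S m.+1.
Proof. by rewrite /U Upair_S. Qed.

Definition Ep i := q ^+ 'C(i, 2) * x ^+ i / qfact q i.
Definition pp j := rho j / qfact q j.
Definition hh j := if j is m.+1 then U x s q m / qfact q m.+1 else 0.
Definition em i := (- x) ^+ i / qfact q i.

Lemma S_fps M : S M = qfact q M * fps_mul Ep pp M.
Proof.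
rewrite /S /fps_mul mulr_sumr; apply: eq_bigr => i _.
have hi : (i <= M)%N by rewrite -ltnS ltn_ord.
rewrite /gam hi /Ep /pp.
have h1 := fn M. have h2 := fn i. have h3 := fn (M - i).
move: h1 h2 h3.
set A := qfact q M; set B := qfact q i; set C := qfact q (M - i).
set D := q ^+ 'C(i, 2); set E := x ^+ i; set F := rho (M - i).
move=> h1 h2 h3; clearbody A B C D E F; clear qn fn.
by fld.
Qed.

Lemma hh_fps j : hh j = fps_mul Ep pp j.
Proof.
case: j => [|m].
  by rewrite /fps_mul big_ord_recl big_ord0 /pp rho0 mul0r mulr0 addr0.
by rewrite /hh U_S S_fps mulrC mulrA mulVf ?fn // mul1r.
Qed.

Lemma em_Ep N : fps_mul em Ep N = (N == 0%N)%:R.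
Proof.
have step K : qint q K.+1 * fps_mul em Ep K.+1 = (q ^+ K - 1) * x * fps_mul em Ep K.
  have -> : qint q K.+1 * fps_mul em Ep K.+1
    = \sum_(i < K.+2) qint q i * em i * Ep (K.+1 - i)
      + \sum_(i < K.+2) q ^+ i * em i * (qint q (K.+1 - i) * Ep (K.+1 - i)).
    rewrite /fps_mul mulr_sumr -big_split /=; apply: eq_bigr => i _.
    have hi := ltn_ord i.
    have -> : qint q K.+1 = qint q i + q ^+ i * qint q (K.+1 - i).
      by rewrite -qintD; congr qint; lia.
    ring.
  have -> : \sum_(i < K.+2) qint q i * em i * Ep (K.+1 - i)
           = \sum_(i < K.+1) - x * em i * Ep (K - i).
    rewrite big_ord_recl /= qint0 !mul0r add0r; apply: eq_bigr => i _.
    rewrite /bump /= add1n subSS.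
    have e1 : qint q i.+1 * em i.+1 = - x * em i.
      rewrite /em qfactS exprS.
      have := qn i; have := fn i; move: (qint q i.+1) (qfact q i) => a b ha hb.
      by fld.
    by rewrite e1.
  have -> : \sum_(i < K.+2) q ^+ i * em i * (qint q (K.+1 - i) * Ep (K.+1 - i))
           = \sum_(i < K.+1) q ^+ K * x * em i * Ep (K - i).
    rewrite big_ord_recr /= subnn qint0 mul0r mulr0 addr0; apply: eq_bigr => i _.
    have hi := ltn_ord i.
    rewrite (_ : (K.+1 - i)%N = (K - i).+1); last by lia.
    have e2 : qint q (K - i).+1 * Ep (K - i).+1 = q ^+ (K - i) * x * Ep (K - i).
      rewrite /Ep qfactS exprS binS bin1 exprD.
      have := qn (K - i); have := fn (K - i); move: (qint q (K - i).+1) (qfact q (K - i)) => a b ha hb.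
      by fld.
    rewrite e2 (_ : q ^+ K = q ^+ i * q ^+ (K - i)); last by rewrite -exprD; congr (_ ^+ _); lia.
    ring.
  rewrite /fps_mul -big_split mulr_sumr; apply: eq_bigr => i _ /=; ring.
elim: N => [|N IH].
  by rewrite /fps_mul big_ord_recl big_ord0 /em /Ep !expr0 qfact0 !divr1 !mul1r addr0.
have := step N; rewrite IH.
have -> : (q ^+ N - 1) * x * (N == 0%N)%:R = 0.
  by case: N {IH} => [|N]; rewrite ?expr0 ?subrr ?mul0r ?mulr0.
move/eqP; rewrite mulf_eq0 (negbTE (qn N)) /= => /eqP ->.
by [].
Qed.

Lemma em_hh N : fps_mul em hh N = pp N.
Proof.
rewrite (@fps_mul_ext _ em em hh (fps_mul Ep pp)) //; last by move=> i _; exact: hh_fps.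
rewrite -fps_mulA (@fps_mul_ext _ _ (fun i => (i == 0%N)%:R) pp pp) //; last by move=> i _; exact: em_Ep.
rewrite /fps_mul big_ord_recl /= subn0 mul1r big1 ?addr0 // => i _.
by rewrite /bump /= mul0r.
Qed.

End Explicit.

Lemma sum_pairs (R : realFieldType) (m : nat) (F : nat -> R) :
  \sum_(i < 2 * m) F i = \sum_(k < m) (F (2 * k)%N + F (2 * k).+1).
Proof.
elim: m => [|m IH]; first by rewrite muln0 !big_ord0.
rewrite (_ : (2 * m.+1 = (2 * m).+2)%N); last by lia.
by rewrite !big_ord_recr /= IH addrA.
Qed.

Section Final.
Variable R : realFieldType.
Variables (q : R) (G : nat -> R) (x s : R).
Hypothesis hq : q != -1.
Hypothesis hG : is_qGenocchi q G.

Let qn k := qint_neq0 k hq.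
Let fn k := qfact_neq0 k hq.

Definition Aser i := (1 + (-1) ^+ i) * x ^+ i / qfact q i.
Definition Bser i := (1 - (-1) ^+ i) * x ^+ i / qfact q i.
Definition he j := if odd j then 0 else hh q x s j.
Definition ho j := if odd j then hh q x s j else 0.
Definition tt N := genocchi_series q G N * x ^+ N.-1.

Lemma G1 N : fps_mul Aser he N = fps_mul Bser ho N.
Proof.
apply/eqP; rewrite -subr_eq0; apply/eqP.
have -> : fps_mul Aser he N - fps_mul Bser ho N
        = if odd N then 0 else 2 * fps_mul (em q x) (hh q x s) N.
  rewrite /fps_mul -sumrB.
  case hN: (odd N).
    apply: big1 => i _; have hi : (i <= N)%N by rewrite -ltnS ltn_ord.
    rewrite /Aser /Bser /he /ho oddB // hN -signr_odd.
    by case: (odd i) => /=; rewrite ?expr0 ?expr1; ring.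
  rewrite mulr_sumr; apply: eq_bigr => i _; have hi : (i <= N)%N by rewrite -ltnS ltn_ord.
  rewrite /Aser /Bser /he /ho /em oddB // hN (exprNn x) -signr_odd.
  by case: (odd i) => /=; rewrite ?expr0 ?expr1; ring.
rewrite em_hh; last exact: hq.
rewrite /pp /rho.
by case: (odd N); rewrite ?mul0r ?mulr0.
Qed.

Lemma gs0 : genocchi_series q G 0 = 0.
Proof. by []. Qed.

Lemma G2 N : fps_mul Aser tt N = fps_mulz Bser N.
Proof.
case: N => [|K].
  by rewrite /fps_mul big_ord_recl big_ord0 /tt gs0 /= !mul0r mulr0 addr0.
have := hG K.+1; rewrite /= /fps_mul /fps_add /fps_sub /fps_mulz => h.
have -> : Bser K = (qexp q K - qexpN q K) * x ^+ K by rewrite /Bser /qexp /qexpN; ring.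
rewrite -h mulr_suml; apply: eq_bigr => i _.
have hi := ltn_ord i.
case: (boolP (nat_of_ord i == K.+1)) => [/eqP ->|hne].
  by rewrite subnn /tt gs0 !mul0r !mulr0 mul0r.
have hik : (i <= K)%N by move: hne hi; move/eqP; lia.
rewrite /tt /Aser /qexp /qexpN subSn //=.
rewrite (_ : x ^+ K = x ^+ i * x ^+ (K - i)); last by rewrite -exprD subnKC.
ring.
Qed.

Lemma G3 N : fps_mul tt ho N = fps_mulz he N.
Proof.
apply: (@fps_cancel _ Aser); first by rewrite /Aser /= expr0 qfact0 divr1 mulr1 (_ : 1 + 1 = 2%:R) // pnatr_eq0.
move=> M.
rewrite -fps_mulA (@fps_mul_ext _ _ (fps_mulz Bser) ho ho) //; last by move=> i _; exact: G2.
rewrite fps_mulz_mul fps_mul_mulz.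
by case: M => [|M] //=; rewrite G1.
Qed.

End Final.

Lemma gs_odd (R : realFieldType) (q : R) G N : odd N -> genocchi_series q G N = 0.
Proof. by rewrite /genocchi_series => ->. Qed.

Unset Implicit Arguments. Set Strict Implicit.

Theorem theorem3p3 (R : realFieldType) (q : R) (hq : q != -1)
  (G : nat -> R) (hG : is_qGenocchi q G) (n : nat) (x s : R) :
  U x s q (2 * n).+1 =
  \sum_(k < n.+1)
     qbinom q (2 * n).+2 (2 * k) / qint q (2 * k).+1
     * qpoch (- q) q ((2 * n - 2 * k).+1)
     * (-1) ^+ (n - k) * G ((2 * n - 2 * k).+2)
     * x ^+ ((2 * n).+1 - 2 * k) * U x s q (2 * k).
Proof.
have h := G3 x s hq hG (2 * n).+3.
have o2 : odd (2 * n) = false by rewrite mul2n odd_double.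
rewrite /fps_mulz /he /= o2 /= in h.
have -> : U x s q (2 * n).+1 = qfact q (2 * n).+2 * (U x s q (2 * n).+1 / qfact q (2 * n).+2).
  by rewrite mulrC mulfVK ?qfact_neq0.
rewrite -h /fps_mul (_ : ((2 * n).+4 = 2 * n.+2)%N); last by lia.
rewrite (@sum_pairs _ n.+2 (fun i => tt q G x i * ho q x s ((2 * n).+3 - i)%N)).
rewrite big_ord_recl /tt muln0 (gs0 q G) (@gs_odd _ q G 1%N) // !mul0r !add0r.
rewrite mulr_sumr [RHS](reindex_inj rev_ord_inj); apply: eq_bigr => k _.
have er : nat_of_ord (rev_ord k) = (n - k)%N by rewrite /= subSS.
rewrite er.
have hk : (k <= n)%N by rewrite -ltnS ltn_ord.
have eb : bump 0 k = k.+1 by rewrite /bump leq0n.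
rewrite lift0.
have e1 : (2 * n - 2 * (n - k) = 2 * k)%N by lia.
have e2 : (n - (n - k) = k)%N by lia.
have e3 : ((2 * n).+1 - 2 * (n - k) = (2 * k).+1)%N by lia.
have e4 : ((2 * n).+3 - 2 * k.+1 = (2 * (n - k)).+1)%N by lia.
have e5 : (2 * k.+1 = (2 * k).+2)%N by lia.
have e6 : ((2 * n).+2 - 2 * (n - k) = (2 * k).+2)%N by lia.
rewrite e1 e2 e3 e4 e5 /qbinom e6.
rewrite (@gs_odd _ q G (2 * k).+3); last by rewrite /= mul2n odd_double.
rewrite mul0r mul0r addr0.
rewrite (_ : (((2 * k).+2).-1 = (2 * k).+1)%N) //.
rewrite /genocchi_series.
have o3 : odd (2 * k) = false by rewrite mul2n odd_double.
have o4 : odd (2 * (n - k)) = false by rewrite mul2n odd_double.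
rewrite /= o3 /=.
rewrite (_ : ((2 * k)./2 = k)%N); last by rewrite mul2n doubleK.
rewrite /ho /hh /= o4 /= (qfactS q (2 * (n - k))).
have h1 := qfact_neq0 (2 * (n - k)) hq. have h2 := qfact_neq0 (2 * k).+2 hq.
have h3 := qint_neq0 (2 * (n - k)) hq.
move: h1 h2 h3.
move: (qfact q (2 * (n - k))) (qfact q (2 * k).+2) (qint q (2 * (n - k)).+1) => a b c ha hb hc.
by fld.
Qed.
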